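(* Let $G$ be a cyclic union of cliques $G_1,\dots,G_m$. Then $G$ is not a stable motif (for any CTLN $W(G,\varepsilon,\delta)$ with legal parameters).
   Context: A clique is a graph in which every pair of nodes is bidirectionally connected. A cyclic union of $G_1,\dots,G_m$ is the graph on the disjoint union of their vertex sets, keeping all edges within each $G_i$, adding all edges from every node of $G_i$ to every node of $G_{i+1}$ (indices mod $m$), and no other edges. Legal parameters: $\delta>0$, $0<\varepsilon<\frac{\delta}{\delta+1}$. For a graph $H$ on $[h]$, $W=W(H,\varepsilon,\delta)$ has $W_{ii}=0$, $W_{ij}=-1+\varepsilon$ if $j\to i$, $W_{ij}=-1-\delta$ if $i\ne j$, $j\not\to i$; dynamics $\dot x_i=-x_i+[\sum_jW_{ij}x_j+\theta]_+$, $\theta>0$; assumed nondegenerate. $H$ is a stable motif if $\theta(I-W)^{-1}1$ has all entries positive and all eigenvalues of $I-W$ have positive real part. *)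

(* Defs.v *)
From HB Require Import structures.
From mathcomp Require Import all_boot all_order all_algebra.
From mathcomp Require Import complex.
Set Implicit Arguments. Unset Strict Implicit. Unset Printing Implicit Defensive.
Import Order.TTheory GRing.Theory Num.Theory.
Local Open Scope ring_scope.

(* A directed graph on [h] = 'I_h : G j i  means the edge  j -> i. *)

(* The vertices of the graph are
   labelled 'I_h and [part v] is the index of the clique containing v
   (part must be surjective so that every clique is nonempty).
   j -> i (for j <> i) iff j, i lie in the same clique, or the clique of i
   is the (cyclic) successor of the clique of j. *)
Definition cyclic_union_cliques (h m : nat) (part : 'I_h -> 'I_m) : rel 'I_h :=
  fun j i => (j != i) && ((part i == part j) || (part i == ordS (part j))).

Definition legal_params (R : realFieldType) (eps delta : R) : Prop :=
  0 < delta /\ 0 < eps /\ eps < delta / (delta + 1).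

Definition ctln_W (R : pzRingType) (h : nat) (G : rel 'I_h) (eps delta : R)
  : 'M[R]_h :=
  \matrix_(i, j) (if i == j then 0
                  else if G j i then -1 + eps else -1 - delta).

(* We also require
   I - W to be invertible so that (I - W)^{-1} is meaningful (this is implied
   by the eigenvalue condition anyway). *)
Definition stable_motif (R : rcfType) (h : nat) (G : rel 'I_h)
  (eps delta theta : R) : Prop :=
  let A := 1%:M - ctln_W G eps delta in
  [/\ A \in unitmx,
      (forall i, 0 < (theta *: (invmx A *m (const_mx 1 : 'cV[R]_h))) i 0)
    & (forall z : R[i], eigenvalue (map_mx (fun x => x%:C%C) A) z ->
                        0 < complex.Re z)].

(* Main.v *)
Require Import Defs.
From HB Require Import structures.
From mathcomp Require Import all_boot all_order all_algebra.
From mathcomp Require Import complex.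
From mathcomp Require Import mxred spectral.
From mathcomp Require Import zify ring lra.
Import Order.TTheory GRing.Theory Num.Theory.
Local Open Scope ring_scope.


Lemma val_ordS m (l : 'I_m) : val (ordS l) = if l.+1 == m then 0%N else l.+1.
Proof.
rewrite /ordS /=; have := ltn_ord l; case: eqP => [->|ne] lt.
  by rewrite modnn.
by rewrite modn_small //; lia.
Qed.

Lemma ordS_neq m (l : 'I_m) : (1 < m)%N -> ordS l != l.
Proof.
move=> m1; apply/eqP => /(congr1 val); rewrite val_ordS; have := ltn_ord l.
case: eqP => /= ? ?; lia.
Qed.

Lemma ordSS_neq m (l : 'I_m) : (2 < m)%N -> ordS (ordS l) != l.
Proof.
move=> m1; apply/eqP => /(congr1 val); rewrite !val_ordS; have := ltn_ord l.
case: (l.+1 =P m) => /= H1; case: (_ =P m) => /= H2 ?; lia.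
Qed.


Lemma key (R : realFieldType) (x y e d : R) :
  1 <= x -> 1 <= y -> 0 < e -> 0 < d -> e * (d + 1) < d ->
  0 < x * y * ((1 - e) * (1 + d)) - (x * (1 - e) + e) * (y * (1 - e) + e).
Proof.
move=> x1 y1 e0 d0 ed.
have e1 : e < 1 by nra.
have h1 : 0 <= (x - 1) * (y - 1) by nra.
have h2 : 1 <= x * y by nra.
have -> : x * y * ((1 - e) * (1 + d)) - (x * (1 - e) + e) * (y * (1 - e) + e)
  = (1 - e) * (e * (x - 1) * (y - 1) + d * (x * y - 1)) + (d - e * (d + 1)) by ring.
have : 0 <= (1 - e) * (e * ((x - 1) * (y - 1)) + d * (x * y - 1)).
  apply: mulr_ge0; first lra.
  apply: addr_ge0; apply: mulr_ge0; lra.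
rewrite mulrA; lra.
Qed.


Section S.
Variables (R : rcfType) (h m : nat) (part : 'I_h -> 'I_m) (eps delta : R).
Hypothesis m3 : (2 < m)%N.

Definition cnt (k : 'I_m) : nat := #|[pred i | part i == k]|.

Definition gf (k l : 'I_m) : R :=
  (1 + delta) - (eps + delta) * ((k == l)%:R + (k == ordS l)%:R).

Lemma A_entry i j :
  (1%:M - ctln_W (cyclic_union_cliques part) eps delta) i j
  = gf (part i) (part j) + eps * (i == j)%:R.
Proof.
have m1 : (1 < m)%N by lia.
rewrite /gf !mxE /cyclic_union_cliques.
case: (eqVneq i j) => [->|ne].
  rewrite eqxx eq_sym (negbTE (@ordS_neq _ (part j) m1)) /=. ring.
rewrite /=.
case: (eqVneq (part i) (part j)) => [e|ne2] /=.
  rewrite e eq_sym (negbTE (@ordS_neq _ (part j) m1)) /=; ring.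
case: (part i == ordS (part j)) => /=; ring.
Qed.

Lemma sum_part (S : pzRingType) (F : 'I_m -> S) :
  \sum_i F (part i) = \sum_k (cnt k)%:R * F k.
Proof.
rewrite (partition_big part predT) //=; apply: eq_bigr => k _.
rewrite (eq_bigr (fun _ => F k)); last by move=> i /eqP ->.
rewrite sumr_const mulr_natl /cnt; congr (_ *+ _); apply: eq_card => i; rewrite !inE.
Qed.

Definition Nmx : 'M[R]_m :=
  \matrix_(k, l) ((cnt k)%:R * gf k l + eps * (k == l)%:R).

Local Notation Cx := (fun x : R => x%:C%C).

Lemma lift_eig (w : 'rV[R[i]]_m) z :
  (forall k : 'I_m, exists v : 'I_h, part v = k) ->
  w *m map_mx Cx Nmx = z *: w -> w != 0 ->
  eigenvalue (map_mx Cx (1%:M - ctln_W (cyclic_union_cliques part) eps delta)) z.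
Proof.
move=> surj Hw w0; apply/eigenvalueP; exists (\row_j w 0 (part j)).
  apply/rowP => j; move/rowP: Hw => /(_ (part j)); rewrite !mxE => <-.
  have HA i1 j1 : map_mx Cx (1%:M - ctln_W (cyclic_union_cliques part) eps delta) i1 j1
     = (gf (part i1) (part j1))%:C%C + eps%:C%C * (i1 == j1)%:R.
    by rewrite [LHS]mxE A_entry rmorphD rmorphM /= rmorph_nat.
  have HN k l : map_mx Cx Nmx k l = (cnt k)%:R * (gf k l)%:C%C + eps%:C%C * (k == l)%:R.
    by rewrite [LHS]mxE mxE rmorphD !rmorphM /= !rmorph_nat.
  under eq_bigr do rewrite HA mxE mulrDr.
  rewrite big_split /=.
  rewrite (@sum_part _ (fun k => w 0 k * (gf k (part j))%:C%C)).
  under [X in _ = X]eq_bigr do rewrite HN mulrDr.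
  rewrite big_split /=; congr (_ + _).
    by apply: eq_bigr => k _; rewrite mulrCA.
  rewrite (bigD1 j) //= (bigD1 (part j)) //= !eqxx !big1 ?addr0 //.
    by move=> k /negbTE ->; rewrite mulr0 mulr0.
  by move=> k /negbTE; rewrite eq_sym => ->; rewrite mulr0 mulr0.
apply: contra w0 => /eqP e; apply/eqP/rowP => k; have [v <-] := surj k.
by move/rowP: e => /(_ v); rewrite !mxE.
Qed.


Hypothesis surj : forall k : 'I_m, exists v : 'I_h, part v = k.
Hypothesis e0 : 0 < eps.
Hypothesis d0 : 0 < delta.
Hypothesis ed : eps * (delta + 1) < delta.

Lemma cnt_ge1 k : 1 <= (cnt k)%:R :> R.
Proof.
rewrite ler1n /cnt; apply/card_gt0P; have [v <-] := surj k.
by exists v; rewrite inE.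
Qed.

Lemma Nkk k : Nmx k k = (cnt k)%:R * (1 - eps) + eps.
Proof.
have m1 : (1 < m)%N by lia.
rewrite mxE /gf eqxx eq_sym (negbTE (@ordS_neq _ k m1)) /=; ring.
Qed.

Lemma Nkl k l : k != l -> Nmx k l = (cnt k)%:R * ((1 + delta) - (eps + delta) * (k == ordS l)%:R).
Proof.
move=> /negbTE kl; rewrite mxE /gf kl /=; ring.
Qed.

Lemma term_gt0 k l : k != l -> 0 < Nmx k l * Nmx l k - Nmx k k * Nmx l l.
Proof.
move=> kl; have e0' := e0; have d0' := d0; have ed' := ed; have lk : l != k by rewrite eq_sym.
rewrite (Nkl _ _ kl) (Nkl _ _ lk) !Nkk.
have x1 := cnt_ge1 k; have y1 := cnt_ge1 l.
have K := @key R _ _ _ _ x1 y1 e0 d0 ed.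
have nb : ~~ ((k == ordS l) && (l == ordS k)).
  apply/negP => /andP[/eqP e1 /eqP e2].
  by move: (@ordSS_neq _ l m3); rewrite -e1 -e2 eqxx.
move: nb; case: (k == ordS l); case: (l == ordS k) => //= _.
- set x := (cnt k)%:R : R in K *; set y := (cnt l)%:R : R in K *.
  have -> : x * (1 + delta - (eps + delta) * 1) * (y * (1 + delta - (eps + delta) * 0)) = x * y * ((1 - eps) * (1 + delta)) by ring.
  lra.
- set x := (cnt k)%:R : R in K *; set y := (cnt l)%:R : R in K *.
  have -> : x * (1 + delta - (eps + delta) * 0) * (y * (1 + delta - (eps + delta) * 1)) = x * y * ((1 - eps) * (1 + delta)) by ring.
  lra.
- rewrite !mulr0 !subr0; set x := (cnt k)%:R : R in K *; set y := (cnt l)%:R : R in K *.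
  have xy : 0 <= x * y by nra.
  have H : x * y * ((1 - eps) * (1 + delta)) <= x * y * ((1 + delta) * (1 + delta)).
    rewrite -subr_ge0 (_ : _ - _ = x * y * ((1 + delta) * (eps + delta))); last by ring.
    apply: mulr_ge0 => //; apply: mulr_ge0; lra.
  have -> : x * (1 + delta) * (y * (1 + delta)) = x * y * ((1 + delta) * (1 + delta)) by ring.
  lra.
Qed.

Lemma trace_gap : (\tr Nmx) ^+ 2 < \tr (Nmx *m Nmx).
Proof.
rewrite -subr_gt0.
have -> : \tr (Nmx *m Nmx) - (\tr Nmx) ^+ 2
    = \sum_k \sum_l (Nmx k l * Nmx l k - Nmx k k * Nmx l l).
  rewrite /mxtrace; under eq_bigr do rewrite mxE.
  rewrite expr2 big_distrl /= -sumrB; apply: eq_bigr => k _.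
  by rewrite big_distrr /= -sumrB.
have m0 : (0 < m)%N by lia.
have m1 : (1 < m)%N by lia.
pose k0 : 'I_m := Ordinal m0; pose l0 : 'I_m := Ordinal m1.
have kl : k0 != l0 by [].
have ge0 k l : 0 <= Nmx k l * Nmx l k - Nmx k k * Nmx l l.
  case: (eqVneq k l) => [->|ne]; first by rewrite subrr.
  exact/ltW/(term_gt0 _ _ ne).
rewrite (bigD1 k0) //= (bigD1 l0) //=.
have := term_gt0 _ _ kl.
have : 0 <= \sum_(i < m | i != l0) (Nmx k0 i * Nmx i k0 - Nmx k0 k0 * Nmx i i).
  by apply: sumr_ge0 => *; apply: ge0.
have : 0 <= \sum_(i < m | i != k0) \sum_l (Nmx i l * Nmx l i - Nmx i i * Nmx l l).
  by apply: sumr_ge0 => *; apply: sumr_ge0 => *; apply: ge0.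
lra.
Qed.

End S.


Lemma ReD (R : rcfType) : {morph (fun z : R[i] => complex.Re z) : x y / x + y}.
Proof. by move=> [a b] [c d]. Qed.

Lemma Re_sum (R : rcfType) (I : finType) (F : I -> R[i]) :
  complex.Re (\sum_i F i) = \sum_i complex.Re (F i).
Proof. exact: (big_morph _ (@ReD R) (erefl _)). Qed.

Lemma Re_sqr (R : rcfType) (z : R[i]) : complex.Re (z ^+ 2) <= complex.Re z ^+ 2.
Proof.
case: z => a b; rewrite !expr2 /=.
have := sqr_ge0 b; rewrite expr2 => H; lra.
Qed.

Lemma sum_sqr_le (R : realFieldType) n (a : 'I_n -> R) :
  (forall k, 0 <= a k) -> \sum_k a k ^+ 2 <= (\sum_k a k) ^+ 2.
Proof.
move=> a0; rewrite [X in _ <= X]expr2 big_distrl /=; apply: ler_sum => k _.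
rewrite expr2; apply: ler_wpM2l => //.
rewrite (bigD1 k) //= lerDl; exact: sumr_ge0.
Qed.

Theorem corollary4 (R : rcfType) (h m : nat) (part : 'I_h -> 'I_m)
  (eps delta theta : R) :
  (3 <= m)%N ->
  (forall k : 'I_m, exists v : 'I_h, part v = k) ->
  legal_params eps delta -> 0 < theta ->
  ~ stable_motif (cyclic_union_cliques part) eps delta theta.
Proof.
move=> m3 surj [d0 [e0 ed0]] th0 [_ _ Heig].
have ed : eps * (delta + 1) < delta by rewrite -ltr_pdivlMr //; lra.
pose N := Nmx R h m part eps delta.
pose Nc := map_mx (fun x : R => x%:C%C) N.
have eigN z : eigenvalue Nc z -> 0 < complex.Re z.
  by move=> /eigenvalueP [w Hw w0]; apply: Heig; exact: (@lift_eig R h m part eps delta m3 w z surj Hw w0).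
have m0 : (0 < m)%N by lia.
have [P Pu Ptrig] := Schur Nc m0.
have Punit : P \in unitmx := unitarymx_unit Pu.
move: Ptrig; rewrite /similar_to /= => Ptrig.
set T := conjmx P Nc in Ptrig.
have TE : T = P *m Nc *m invmx P by rewrite /T conjumx.
have eigT k : eigenvalue Nc (T k k).
  have : eigenvalue T (T k k).
    rewrite eigenvalue_root_char char_poly_trig // /root horner_prod.
    by apply/prodf_eq0; exists k => //; rewrite hornerXsubC subrr.
  move=> /eigenvalueP [v Hv v0]; apply/eigenvalueP; exists (v *m P).
    by rewrite scalemxAl -Hv TE !mulmxA mulmxKV.
  apply: contra v0 => /eqP vP0; apply/eqP.
  by rewrite -[v](mulmxK Punit) vP0 mul0mx.
have trT : \tr T = (\tr N)%:C%C.
  by rewrite TE mxtrace_mulC mulmxA mulVmx // mul1mx trace_map_mx.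
have trT2 : \tr (T *m T) = (\tr (N *m N))%:C%C.
  rewrite TE !mulmxA mulmxKV // mxtrace_mulC !mulmxA mulVmx // mul1mx.
  by rewrite -map_mxM trace_map_mx.
have trT2' : \tr (T *m T) = \sum_k T k k ^+ 2.
  rewrite /mxtrace; apply: eq_bigr => k _; rewrite mxE (bigD1 k) //= big1 ?addr0 ?expr2 //.
  move=> j jk; case: (ltngtP k j) => [kj|jk'|e].
  - by move/is_trig_mxP: Ptrig => ->; rewrite ?mul0r.
  - by move/is_trig_mxP: Ptrig => /(_ j k jk') ->; rewrite mulr0.
  - by move: jk; rewrite (val_inj e) eqxx.
have gap := @trace_gap R h m part eps delta m3 surj e0 d0 ed.
have E1 : \tr N = \sum_k complex.Re (T k k).
  by rewrite -Re_sum -/(mxtrace T) trT.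
have E2 : \tr (N *m N) <= \sum_k complex.Re (T k k) ^+ 2.
  have -> : \tr (N *m N) = complex.Re (\tr (T *m T)) by rewrite trT2.
  rewrite trT2' Re_sum; apply: ler_sum => k _; exact: Re_sqr.
have E3 := @sum_sqr_le R m (fun k => complex.Re (T k k)) (fun k => ltW (eigN _ (eigT k))).
rewrite /N in E1 E2; rewrite -E1 in E3.
lra.
Qed.
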